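(* Let $\mathcal{S}\subseteq\mathcal{L}$, let $\mathcal{AF}_{\vdash}=(\vdash,\overline{\cdot},\mathsf{id})$ be contrapositable with $\vdash$ satisfying Cut, and let $\Theta$ be a maximal $\mathcal{AF}_{\vdash}(\mathcal{S})$-consistent subset of $\mathcal{S}$. Then $\mathit{Arg}_{\vdash}(\Theta)$ is a stable extension of $\mathcal{AF}_{\mathsf{con}}(\mathcal{S})$.
   Context: $\mathcal{L}$ is a set of formulas; ${\vdash}\subseteq\wp_{\sf fin}(\mathcal{L})\times\mathcal{L}$ is arbitrary and $\overline{\cdot}:\mathcal{L}\to\wp(\mathcal{L})$. $\mathit{Arg}_{\vdash}(\mathcal{S})=\{(\Gamma,\gamma):\Gamma\subseteq\mathcal{S}\text{ finite},\Gamma\vdash\gamma\}$. For a relation $\vdash'$, $\mathcal{AF}_{\vdash'}(\mathcal{S})$ has arguments $\mathit{Arg}_{\vdash'}(\mathcal{S})$, with $(\Gamma,\gamma)$ attacking $(\Gamma',\gamma')$ iff $\gamma\in\overline{\lambda}$ for some $\lambda\in\Gamma'$. A stable extension is a conflict-free set of arguments that attacks every argument not in it. $\vdash^{+\phi}$ is the transitive closure of ${\vdash}\cup\{(\emptyset,\phi)\}$; Cut: for every $\phi$ and finite $\Gamma,\Delta$, if $\Gamma\vdash\phi$ and $\Delta\vdash^{+\phi}\gamma$ then $\Gamma\cup\Delta\vdash\gamma$. Contrapositable: for all finite $\Theta$, if $\Theta\vdash\gamma'$ with $\gamma'\in\overline{\gamma}$, then for every $\sigma\in\Theta$, $(\Theta\cup\{\gamma\})\setminus\{\sigma\}\vdash\sigma'$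 for some $\sigma'\in\overline{\sigma}$. $\Theta\subseteq\mathcal{S}$ is $\mathcal{AF}_{\vdash}(\mathcal{S})$-inconsistent iff there are $\Theta'\subseteq\Theta$ and $\gamma\in\Theta'$ with $\Theta'\setminus\{\gamma\}\vdash\gamma'$ for some $\gamma'\in\overline{\gamma}$, consistent otherwise; maximal consistent = consistent with no consistent proper superset within $\mathcal{S}$. $\vdash_{\mathsf{con}}=\{(\Gamma,\gamma):\Gamma\vdash\gamma,\ \Gamma\text{ consistent}\}$ and $\mathcal{AF}_{\mathsf{con}}(\mathcal{S})=\mathcal{AF}_{\vdash_{\mathsf{con}}}(\mathcal{S})$. *)

(* Defs.v *)
From HB Require Import structures.
From mathcomp Require Import all_boot finmap.

Set Implicit Arguments.
Unset Strict Implicit.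
Unset Printing Implicit Defensive.

Local Open Scope fset_scope.

Section Defs.
Variable L : choiceType.

Definition fmlset := L -> Prop.

Definition crel := {fset L} -> L -> Prop.

(* contrariness operator: contr g gp  <->  gp \in overline(g) *)
Definition contrary := L -> L -> Prop.

Definition fsubset (G : {fset L}) (S : fmlset) : Prop := forall x, x \in G -> S x.

Inductive tclos (R : crel) : crel :=
  | tclos_base G g : R G g -> tclos R G g
  | tclos_trans G D d g : d \in D -> tclos R G d -> tclos R D g ->
      tclos R (G `|` (D `\ d)) g.

Definition plus_phi (vd : crel) (phi : L) : crel :=
  tclos (fun G g => vd G g \/ (G = fset0 /\ g = phi)).

Definition Cut (vd : crel) : Prop :=
  forall (phi g : L) (G D : {fset L}),
    vd G phi -> plus_phi vd phi D g -> vd (G `|` D) g.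

Definition contrapositable (vd : crel) (contr : contrary) : Prop :=
  forall (T : {fset L}) (g g' : L), vd T g' -> contr g g' ->
    forall s, s \in T -> exists s', contr s s' /\ vd ((g |` T) `\ s) s'.

Definition argument := ({fset L} * L)%type.

Definition Arg (vd : crel) (S : fmlset) : argument -> Prop :=
  fun a => fsubset a.1 S /\ vd a.1 a.2.

Definition attacks (contr : contrary) (a b : argument) : Prop :=
  exists l, l \in b.1 /\ contr l a.2.

Definition stable_extension (Args : argument -> Prop) (contr : contrary)
    (E : argument -> Prop) : Prop :=
  (forall a, E a -> Args a) /\
  (forall a b, E a -> E b -> ~ attacks contr a b) /\
  (forall b, Args b -> ~ E b -> exists a, E a /\ attacks contr a b).

Definition inconsistent (vd : crel) (contr : contrary) (T : fmlset) : Prop :=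
  exists (T' : {fset L}) (g : L), fsubset T' T /\ g \in T' /\
    exists g', contr g g' /\ vd (T' `\ g) g'.

Definition consistent vd contr T := ~ inconsistent vd contr T.

Definition maximal_consistent (vd : crel) (contr : contrary) (S T : fmlset) : Prop :=
  (forall x, T x -> S x) /\ consistent vd contr T /\
  forall T' : fmlset, (forall x, T x -> T' x) -> (forall x, T' x -> S x) ->
    consistent vd contr T' -> forall x, T' x -> T x.

Definition vdash_con (vd : crel) (contr : contrary) : crel :=
  fun G g => vd G g /\ consistent vd contr (fun x => x \in G).

End Defs.

(* Main.v *)
Require Import Defs.
From mathcomp Require Import all_boot finmap.
From Stdlib Require Import Classical.

Local Open Scope fset_scope.

Lemma U1D1 (K : choiceType) (a : K) (A : {fset K}) : a \notin A -> (a |` A) `\ a = A.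
Proof.
move=> na; apply/fsetP=> x; rewrite !inE.
case: eqVneq => [->|] //=; by rewrite (negbTE na).
Qed.

Theorem lemma9 (L : choiceType) (vd : crel L) (contr : contrary L)
  (S Theta : fmlset L) :
  contrapositable vd contr -> Cut vd ->
  maximal_consistent vd contr S Theta ->
  stable_extension (Arg (vdash_con vd contr) S) contr (Arg vd Theta).
Proof.
move=> CP _ [TS [Tcons Tmax]].
split; [|split].
- move=> [G g] [/= GT Gg]; split=> /=; first by move=> x /GT /TS.
  split=> //. move=> [T' [g0 [T'G rest]]]; apply: Tcons.
  exists T', g0; split=> //; move=> x /T'G /GT //.
- move=> [G g] [D d] [/= GT Gg] [/= DT Dd] [l [lD cl]] /=.
  have lT : Theta l by apply: DT.
  apply: Tcons; exists (l |` G), l; split.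
    by move=> x; rewrite !inE => /orP [/eqP -> | /GT].
  split; first by rewrite !inE eqxx.
  case: (boolP (l \in G)) => lG.
    have [s' [cs vs]] := CP G l g Gg cl l lG.
    by exists s'.
  by exists g; rewrite U1D1.
- move=> [D d] [/= DS [Dd Dc]] nE.
  have [l [lD nl]] : exists l, l \in D /\ ~ Theta l.
    apply: NNPP => H; apply: nE; split=> //= x xD.
    apply: NNPP => nx; apply: H; by exists x.
  have incT : inconsistent vd contr (fun x => Theta x \/ x = l).
    apply: NNPP => H.
    have sub : forall x, Theta x \/ x = l -> S x.
      by move=> x [/TS|->] //; apply: DS.
    by apply: nl; apply: (Tmax _ (fun x h => or_introl h) sub H l (or_intror erefl)).
  move: incT => [T' [g [T'T [gT [g' [cg vg]]]]]].
  case: (eqVneq g l) => [eg|ngl].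
    subst g; exists (T' `\ l, g'); split; last by exists l.
    split=> //= x; rewrite !inE => /andP [xl /T'T [//|xe]].
    by rewrite xe eqxx in xl.
  case: (boolP (l \in T')) => lT'; last first.
    exfalso; apply: Tcons; exists T', g; split; last by split=> //; exists g'.
    move=> x xT; case: (T'T x xT) => // xe; by rewrite -xe xT in lT'.
  have lT'' : l \in T' `\ g by rewrite !inE lT' eq_sym ngl.
  have [s' [cs vs]] := CP (T' `\ g) g g' vg cg l lT''.
  exists (((g |` (T' `\ g)) `\ l), s'); split; last by exists l.
  split=> //= x; rewrite !inE => /andP [xl xin].
  have xT : x \in T'.
    case/orP: xin => [/eqP -> // | /andP [_ //]].
  case: (T'T x xT) => // xe; by rewrite xe eqxx in xl.
Qed.
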